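(* Let $d\ge2$ and $\epsilon>0$. Suppose that for each $t\in[0,\epsilon]$ there are unit vectors $|x(t)\rangle, |y(t)\rangle\in\mathbb{C}^d$, depending continuously on $t$, such that $$\frac{1}{d^2}\sum_{\mathbf{a}\in\{0,\dots,d-1\}^2} (W_\mathbf{a}\otimes W_\mathbf{a})\big(|x(t)\rangle\langle x(t)|\otimes|y(t)\rangle\langle y(t)|\big)(W_\mathbf{a}\otimes W_\mathbf{a})^\dagger = \frac{t}{d}U_{SW} + \frac{1-t}{d^2}I_{d^2}$$ for all $t\in[0,\epsilon]$, and $|x(0)\rangle = |0\rangle$, $|y(0)\rangle = F|0\rangle$. Then this family (i.e. the pair of WH covariant frames $\{W_\mathbf{a}|x(t)\rangle\}$, $\{W_\mathbf{a}|y(t)\rangle\}$, described by the projectors $|x(t)\rangle\langle x(t)|$ and $|y(t)\rangle\langle y(t)|$) cannot be (right-)differentiable at $t=0$.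
   Context: $\{|i\rangle\}_{i=0}^{d-1}$ is the standard basis of $\mathbb{C}^d$, indices mod $d$. Let $\tau=\exp(2\pi i\frac{d+1}{2d})$, $\omega=\tau^2=\exp(2\pi i/d)$, $S=\sum_{i=0}^{d-1}|i+1\rangle\langle i|$, $C=\sum_{i=0}^{d-1}\omega^i|i\rangle\langle i|$, and for $\mathbf{a}=(a_1,a_2)\in\mathbb{Z}^2$ let $W_\mathbf{a}=\tau^{a_1a_2}S^{a_1}C^{a_2}$ (Weyl–Heisenberg operators). $F=\frac{1}{\sqrt d}\sum_{k,l=0}^{d-1}\omega^{kl}|k\rangle\langle l|$ is the discrete Fourier transform. $U_{SW}$ is the swap operator on $\mathbb{C}^d\otimes\mathbb{C}^d$. *)

(* Defs.v *)
From HB Require Import structures.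
From mathcomp Require Import all_boot all_order all_algebra.
From mathcomp Require Import complex mxtens.
From mathcomp Require Import all_classical all_reals all_analysis.
Set Implicit Arguments. Unset Strict Implicit. Unset Printing Implicit Defensive.
Import Order.TTheory GRing.Theory Num.Theory.
Import numFieldNormedType.Exports.
Local Open Scope ring_scope.
Local Open Scope complex_scope.
Local Open Scope classical_set_scope.

Section WH.
Variables (R : realType) (d : nat).

Definition omega : R[i] :=
  (cos (2 * pi / d%:R)) +i* (sin (2 * pi / d%:R)).
(* tau = exp(2 pi i (d+1)/(2d)) = exp(i pi (d+1)/d) *)
Definition tau : R[i] :=
  (cos (pi * (d%:R + 1) / d%:R)) +i* (sin (pi * (d%:R + 1) / d%:R)).

Definition Smx : 'M[R[i]]_d := \matrix_(k, l) (((k : nat) == (l.+1 %% d)%N)%:R).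
Definition Cmx : 'M[R[i]]_d := \matrix_(k, l) (((k : nat) == l)%:R * omega ^+ k).
Definition Wmx (a1 a2 : nat) : 'M[R[i]]_d :=
  tau ^+ (a1 * a2) *: (Smx ^+ a1 *m Cmx ^+ a2).

Definition adj {m n : nat} (A : 'M[R[i]]_(m, n)) : 'M[R[i]]_(n, m) :=
  (map_mx conjc A)^T.

Definition Fmx : 'M[R[i]]_d :=
  \matrix_(k, l) (((Num.sqrt (d%:R : R))%:C)^-1 * omega ^+ (k * l)).

Definition ket0 : 'cV[R[i]]_d := \col_k (((k : nat) == 0%N)%:R).

Definition ketbra (x : 'cV[R[i]]_d) : 'M[R[i]]_d := x *m adj x.

Definition unit_vec (x : 'cV[R[i]]_d) : Prop := adj x *m x = 1%:M.

Definition Uswap : 'M[R[i]]_(d * d) :=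
  \matrix_(r, c) ((((mxtens_unindex r).1 == (mxtens_unindex c).2)
                   && ((mxtens_unindex r).2 == (mxtens_unindex c).1))%:R).

Definition twirl (P Q : 'M[R[i]]_d) : 'M[R[i]]_(d * d) :=
  ((d%:R ^+ 2)^-1 : R[i]) *:
  \sum_(a1 < d) \sum_(a2 < d)
     ((Wmx a1 a2 *t Wmx a1 a2) *m (P *t Q) *m adj (Wmx a1 a2 *t Wmx a1 a2)).

End WH.

Definition vec_continuous_on (R : realType) (d : nat) (eps : R)
    (x : R -> 'cV[R[i]]_d) : Prop :=
  forall k : 'I_d,
    {within `[0, eps], continuous (fun t : R => complex.Re (x t k ord0))} /\
    {within `[0, eps], continuous (fun t : R => complex.Im (x t k ord0))}.

Definition mx_right_differentiable_at0 (R : realType) (m n : nat)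
    (P : R -> 'M[R[i]]_(m, n)) : Prop :=
  forall (k : 'I_m) (l : 'I_n),
    cvg ((fun h : R => (complex.Re (P h k l) - complex.Re (P 0 k l)) / h) @ 0^'+) /\
    cvg ((fun h : R => (complex.Im (P h k l) - complex.Im (P 0 k l)) / h) @ 0^'+).

(* Main.v *)
Require Import Defs.
Set Warnings "-all".
From HB Require Import structures.
From mathcomp Require Import all_boot all_order all_algebra.
From mathcomp Require Import complex mxtens.
From mathcomp Require Import all_classical all_reals all_analysis.
From mathcomp Require Import ring lra.
Import Order.TTheory GRing.Theory Num.Theory.
Import numFieldNormedType.Exports.
Local Open Scope ring_scope.
Local Open Scope complex_scope.

Section Om.
Variables (R : realType) (n : nat).
Local Notation D := n.+2.
Local Notation th := (2 * pi / (D%:R : R)).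

Lemma mulcE (a b c e : R) : (a +i* b) * (c +i* e) = (a*c - b*e) +i* (a*e + b*c).
Proof. by []. Qed.

Lemma omegaX k : omega R D ^+ k = cos (k%:R * th) +i* sin (k%:R * th).
Proof.
elim: k => [|k IH]; first by rewrite expr0 mul0r cos0 sin0.
rewrite exprS IH /omega mulcE; set t := 2 * pi / _.
rewrite -addn1 natrD mulrDl mul1r cosD sinD.
by congr (_ +i* _); ring.
Qed.

Lemma D_neq0 : (D%:R : R) != 0. Proof. by rewrite pnatr_eq0. Qed.

Lemma omegaD : omega R D ^+ D = 1.
Proof.
rewrite omegaX mulrCA divff ?D_neq0 // mulr1 mulr_natl cos2pi.
by rewrite sin2pi.
Qed.

Lemma omega_conj : conjc (omega R D) * omega R D = 1.
Proof.
rewrite /omega /= mulcE.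
congr (_ +i* _); last by ring.
by rewrite -[RHS](cos2Dsin2 (2 * pi / D%:R)); ring.
Qed.

Lemma tau_conj : conjc (tau R D) * tau R D = 1.
Proof.
rewrite /tau /= mulcE.
congr (_ +i* _); last by ring.
by rewrite -[RHS](cos2Dsin2 (pi * (D%:R + 1) / D%:R)); ring.
Qed.

Lemma omega_neq1 : omega R D != 1.
Proof.
apply/eqP => /(congr1 (fun z => (complex.Re z, complex.Im z))) /= [Hc Hs].
case: n Hc Hs => [|m] Hc Hs.
  move: Hc; rewrite mulrC mulrA mulVf ?pnatr_eq0 // mul1r cospi => /eqP.
  by move/eqP; lra.
have : 0 < sin (2 * pi / (m.+3)%:R : R).
  apply: sin_gt0_pi; apply/andP; split.
    by rewrite divr_gt0 ?mulr_gt0 ?pi_gt0 ?ltr0n.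
  rewrite ltr_pdivrMr ?ltr0n // mulrC ltr_pM2l ?pi_gt0 //.
  by rewrite ltr_nat.
by rewrite Hs ltxx.
Qed.
End Om.

Section Mx.
Variables (R : realType) (n : nat).
Local Notation D := n.+2.
Local Notation C := R[i].
Local Notation w := (omega R D).

Lemma cM (x y : C) : conjc (x * y) = conjc x * conjc y. Proof. exact: rmorphM. Qed.
Lemma cX (x : C) k : conjc (x ^+ k) = (conjc x) ^+ k. Proof. exact: rmorphXn. Qed.
Lemma cK (x : C) : conjc (conjc x) = x. Proof. by case: x => a b /=; rewrite opprK. Qed.

Lemma sum_omega : \sum_(i < D) w ^+ i = 0.
Proof.
have := subrX1 w D; rewrite omegaD subrr => /esym /eqP.
by rewrite mulf_eq0 subr_eq0 (negPf (omega_neq1 R n)) => /eqP.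
Qed.

Lemma adjM m p q (A : 'M[C]_(m, p)) (B : 'M[C]_(p, q)) : adj (A *m B) = adj B *m adj A.
Proof. by rewrite /adj map_mxM trmx_mul. Qed.

Lemma adjK m p (A : 'M[C]_(m, p)) : adj (adj A) = A.
Proof. by apply/matrixP => i j; rewrite !mxE conjcK. Qed.

Lemma adjZ m p c (A : 'M[C]_(m, p)) : adj (c *: A) = conjc c *: adj A.
Proof. by apply/matrixP => i j; rewrite !mxE rmorphM. Qed.

Lemma adj1 : adj (1%:M : 'M[C]_D) = 1%:M.
Proof. by apply/matrixP => i j; rewrite !mxE eq_sym; case: (_ == _); rewrite ?conjc0 ?conjc1. Qed.

Lemma adjT m p q r (A : 'M[C]_(m, p)) (B : 'M[C]_(q, r)) : adj (A *t B) = adj A *t adj B.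
Proof. by rewrite /adj map_mxT trmx_tens. Qed.

Lemma adjX (A : 'M[C]_D) k : adj (A ^+ k) = adj A ^+ k.
Proof.
elim: k => [|k IH]; first by rewrite !expr0 adj1.
by rewrite exprS exprSr -!mulmxE adjM IH.
Qed.

Lemma trace_tens (A B : 'M[C]_D) : \tr (A *t B) = \tr A * \tr B.
Proof. by rewrite /mxtrace mulr_sum; apply: eq_bigr => k _; rewrite mxE. Qed.


Local Notation S := (Smx R D).
Local Notation Cm := (Cmx R D).

Lemma sum_delta (F : 'I_D -> C) (a : 'I_D) : \sum_m ((m == a)%:R * F m) = F a.
Proof.
rewrite (bigD1 a) //= eqxx mul1r big1 ?addr0 // => m /negPf ->.
by rewrite mul0r.
Qed.

Lemma SE (k l : 'I_D) : S k l = (k == ordS l)%:R.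
Proof. by rewrite mxE. Qed.

Lemma CE (k l : 'I_D) : Cm k l = (k == l)%:R * w ^+ k.
Proof. by rewrite mxE. Qed.

Lemma adjE m p (A : 'M[C]_(m, p)) i j : adj A i j = conjc (A j i).
Proof. by rewrite !mxE. Qed.

Lemma SS : adj S *m S = 1%:M.
Proof.
apply/matrixP => i j; rewrite !mxE.
under eq_bigr => m _ do rewrite adjE !SE rmorph_nat.
rewrite sum_delta.
by rewrite (inj_eq (@ordS_inj _)).
Qed.

Lemma CC : adj Cm *m Cm = 1%:M.
Proof.
apply/matrixP => i j; rewrite !mxE.
under eq_bigr => m _ do rewrite adjE !CE rmorphM rmorph_nat -mulrA.
rewrite sum_delta.
case: eqP => [->|_]; last by rewrite !mul0r mulr0.
by rewrite /= !mulr1n mul1r rmorphXn -exprMn omega_conj expr1n.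
Qed.

Lemma CS : Cm *m S = w *: (S *m Cm).
Proof.
apply/matrixP => i j; rewrite !mxE.
under eq_bigr => m _ do rewrite CE SE eq_sym -mulrA.
rewrite sum_delta.
under eq_bigr => m _ do rewrite CE SE mulrCA.
rewrite sum_delta.
case: (eqVneq i (ordS j)) => [->|_]; last by rewrite !mul0r !mulr0.
by rewrite /= !mulr1n mulr1 mul1r expr_mod ?omegaD // exprS.
Qed.


Lemma SSr : adj S * S = 1. Proof. exact: SS. Qed.
Lemma CCr : adj Cm * Cm = 1. Proof. exact: CC. Qed.
Lemma CSr : Cm * S = w *: (S * Cm). Proof. exact: CS. Qed.
Lemma adjMr (A B : 'M[C]_D) : adj (A * B) = adj B * adj A.
Proof. exact: adjM. Qed.

Lemma CSX a : Cm * S ^+ a = w ^+ a *: (S ^+ a * Cm).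
Proof.
elim: a => [|a IH]; first by rewrite !expr0 mulr1 mul1r scale1r.
rewrite [S ^+ a.+1]exprSr mulrA IH -scalerAl -[S ^+ a * Cm * S]mulrA CSr.
by rewrite -scalerAr scalerA mulrA [w ^+ a.+1]exprSr.
Qed.

Lemma CXS b : Cm ^+ b * S = w ^+ b *: (S * Cm ^+ b).
Proof.
elim: b => [|b IH]; first by rewrite !expr0 mulr1 mul1r scale1r.
rewrite [Cm ^+ b.+1]exprSr -[Cm ^+ b * Cm * S]mulrA CSr.
rewrite (_ : Cm ^+ b * (w *: (S * Cm)) = w *: (Cm ^+ b * (S * Cm))); last first.
  exact: (esym (scalerAr _ _ _)).
rewrite [Cm ^+ b * (S * Cm)]mulrA IH -scalerAl scalerA.
by rewrite -[S * Cm ^+ b * Cm]mulrA [w ^+ b.+1]exprS.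
Qed.

Lemma SSX a : adj (S ^+ a) * S ^+ a = 1.
Proof.
rewrite adjX; elim: a => [|a IH]; first by rewrite !expr0 mulr1.
by rewrite exprSr exprS mulrA -(mulrA _ (adj S)) SSr mulr1 IH.
Qed.

Lemma CCX a : adj (Cm ^+ a) * Cm ^+ a = 1.
Proof.
rewrite adjX; elim: a => [|a IH]; first by rewrite !expr0 mulr1.
by rewrite exprSr exprS mulrA -(mulrA _ (adj Cm)) CCr mulr1 IH.
Qed.

Lemma KC b : adj (Cm ^+ b) * S * Cm ^+ b = (conjc w) ^+ b *: S.
Proof.
have H : S = w ^+ b *: (adj (Cm ^+ b) * S * Cm ^+ b).
  by rewrite -mulrA scalerAr -CXS mulrA CCX mul1r.
by rewrite {2}H scalerA -exprMn omega_conj expr1n scale1r.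
Qed.


Lemma coreM a b :
  adj (S ^+ a * Cm ^+ b) * (S * Cm) * (S ^+ a * Cm ^+ b) = (w ^+ a * (conjc w) ^+ b) *: (S * Cm).
Proof.
rewrite adjMr !mulrA.
set X := adj (Cm ^+ b); set Y := adj (S ^+ a).
rewrite -(mulrA (X * Y * S) Cm (S ^+ a)) CSX -scalerAr -scalerAl !mulrA.
rewrite -(mulrA (X * Y) S (S ^+ a)) -exprS exprSr mulrA.
rewrite -(mulrA X Y (S ^+ a)) /Y SSX mulr1.
rewrite -(mulrA (X * S) Cm (Cm ^+ b)) -exprS exprSr mulrA.
by rewrite /X KC -scalerAl scalerA.
Qed.


Local Notation W := (Wmx R D).
Local Notation mu a b := (w ^+ a * (conjc w) ^+ b).

Lemma Wconj a1 a2 : adj (W a1 a2) *m (S *m Cm) *m W a1 a2 = mu a1 a2 *: (S *m Cm).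
Proof.
rewrite /Wmx adjZ !mulmxE -scalerAl -scalerAr -scalerAl scalerA mulrC.
rewrite rmorphXn -exprMn tau_conj expr1n scale1r.
by rewrite -[_ ^+ a1 * _ ^+ a2]/(S ^+ a1 * Cm ^+ a2) coreM.
Qed.

Lemma Aconj a1 a2 : adj (W a1 a2) *m adj (S *m Cm) *m W a1 a2 = conjc (mu a1 a2) *: adj (S *m Cm).
Proof.
have := congr1 (@adj R _ _) (Wconj a1 a2).
by rewrite adjZ !adjM adjK mulmxA.
Qed.

Lemma mu_conj a b : conjc (mu a b) * mu a b = 1.
Proof.
rewrite cM !cX cK mulrACA -!exprMn omega_conj [w * conjc w]mulrC omega_conj.
by rewrite !expr1n mulr1.
Qed.

Lemma rot (A V P : 'M[C]_D) : \tr (A *m (V *m P *m adj V)) = \tr (adj V *m A *m V *m P).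
Proof.
by rewrite (mxtrace_mulC A) -(mulmxA (adj V *m A) V P) (mxtrace_mulC (adj V *m A)) !mulmxA.
Qed.

Lemma term_tr (V A B P Q : 'M[C]_D) :
  \tr ((A *t B) *m ((V *t V) *m (P *t Q) *m adj (V *t V))) =
  \tr (adj V *m A *m V *m P) * \tr (adj V *m B *m V *m Q).
Proof.
rewrite adjT !tensmx_mul trace_tens.
by rewrite !rot.
Qed.


Lemma DC_neq0 : (D%:R : C) != 0. Proof. by rewrite pnatr_eq0. Qed.

Lemma tr_sum m (I : Type) (r : seq I) (F : I -> 'M[C]_m) :
  \tr (\sum_(i <- r) F i) = \sum_(i <- r) \tr (F i).
Proof. exact: linear_sum. Qed.

Lemma twirl_tr P Q :
  \tr ((adj (S *m Cm) *t (S *m Cm)) *m twirl P Q) =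
  \tr (adj (S *m Cm) *m P) * \tr ((S *m Cm) *m Q).
Proof.
rewrite /twirl -scalemxAr mxtraceZ mulmx_sumr tr_sum.
under eq_bigr => a1 _ do rewrite mulmx_sumr tr_sum.
under eq_bigr => a1 _ do under eq_bigr => a2 _ do
  rewrite term_tr Aconj Wconj -!scalemxAl !mxtraceZ mulrACA mu_conj mul1r.
rewrite !sumr_const !card_ord -mulrnA -[_ *+ (D * D)]mulr_natl natrM -expr2.
by rewrite mulKf // expf_neq0 // DC_neq0.
Qed.


Lemma sum_pair (F : 'I_D -> 'I_D -> C) :
  \sum_i \sum_j F i j = \sum_(r < D * D) F (mxtens_unindex r).1 (mxtens_unindex r).2.
Proof.
rewrite pair_big; apply: reindex => //=.
by exists (@mxtens_index _ _) => i _; rewrite (mxtens_indexK, mxtens_unindexK).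
Qed.

Lemma swap_tr (A B : 'M[C]_D) : \tr ((A *t B) *m Uswap R D) = \tr (A *m B).
Proof.
rewrite /mxtrace.
under eq_bigr => i _ do rewrite mxE.
under [RHS]eq_bigr => i _ do rewrite mxE.
rewrite sum_pair; apply: eq_bigr => r _.
pose c0 := mxtens_index ((mxtens_unindex r).2, (mxtens_unindex r).1).
rewrite (bigD1 c0) //= big1 ?addr0.
  by rewrite !mxE !mxtens_indexK /= !eqxx mulr1.
move=> c Hc; rewrite !mxE.
case: eqP => [E1|]; last by rewrite mulr0.
case: eqP => [E2|]; last by rewrite mulr0.
move: Hc; suff -> : c = c0 by rewrite eqxx.
by rewrite -[c]mxtens_unindexK /c0 -E1 -E2; case: (mxtens_unindex c).
Qed.

Lemma trAB : \tr (adj (S *m Cm) *m (S *m Cm)) = D%:R.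
Proof.
by rewrite adjM mulmxA -(mulmxA (adj Cm)) SS mulmx1 CC mxtrace1.
Qed.


Lemma tr_ketbra (A : 'M[C]_D) (x : 'cV[C]_D) :
  \tr (A *m ketbra x) = \sum_i \sum_j conjc (x i ord0) * A i j * x j ord0.
Proof.
rewrite /mxtrace /ketbra; apply: eq_bigr => i _; rewrite mxE; apply: eq_bigr => j _.
rewrite !mxE big_ord1 !mxE; ring.
Qed.

Lemma c0 : conjc (0 : C) = 0. Proof. by rewrite /= oppr0. Qed.
Lemma cb (b : bool) : conjc (b%:R : C) = b%:R.
Proof. by case: b; rewrite /= ?oppr0 //. Qed.

Lemma f1_0 : \tr (adj (S *m Cm) *m ketbra (ket0 R D)) = 0.
Proof.
rewrite tr_ketbra big1 // => i _; rewrite big1 // => j _.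
rewrite adjE !mxE cb.
case: eqP => Hi; last by rewrite !mul0r.
case: eqP => Hj; last by rewrite mulr0.
rewrite big1 ?c0 ?mulr0 ?mul0r // => m _.
rewrite CE; case: eqP => [->|_]; last by rewrite mul0r mulr0.
rewrite SE.
have -> : (j == ordS i) = false.
  by apply/negbTE/eqP => /(congr1 val) /=; rewrite Hi Hj modn_small.
by rewrite !mul0r.
Qed.


Lemma y0E k : (Fmx R D *m ket0 R D) k ord0 = ((Num.sqrt (D%:R : R))%:C)^-1.
Proof.
rewrite mxE (bigD1 ord0) //= big1 ?addr0.
  by rewrite !mxE /= muln0 expr0 !mulr1.
move=> j Hj; rewrite !mxE; case: eqP => [E|]; last by rewrite mulr0.
by exfalso; move/eqP: Hj; apply; apply: val_inj.
Qed.

Lemma colsum j : \sum_i (S *m Cm) i j = w ^+ j.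
Proof.
under eq_bigr => i _ do rewrite mxE.
under eq_bigr => i _ do under eq_bigr => m _ do rewrite CE mulrCA.
under eq_bigr => i _ do rewrite sum_delta SE.
by rewrite sum_delta.
Qed.

Lemma f2_0 : \tr ((S *m Cm) *m ketbra (Fmx R D *m ket0 R D)) = 0.
Proof.
rewrite tr_ketbra exchange_big /=.
under eq_bigr => j _ do under eq_bigr => i _ do rewrite !y0E mulrAC.
under eq_bigr => j _ do rewrite -mulr_sumr colsum.
by rewrite -mulr_sumr sum_omega mulr0.
Qed.

End Mx.

Local Open Scope classical_set_scope.
Section An.
Variable R : realType.

Lemma is_cvg_sumR (I : Type) (r : seq I) (f : I -> R -> R) :
  (forall i, cvg (f i h @[h --> 0^'+])) ->
  cvg ((\sum_(i <- r) f i h) @[h --> (0:R)^'+]).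
Proof.
move=> H; elim: r => [|a r IH].
  rewrite (_ : (fun h => \sum_(i <- [::]) f i h) = fun=> 0); last first.
    by apply/funext => h; rewrite big_nil.
  exact: is_cvg_cst.
rewrite (_ : (fun h => \sum_(i <- a :: r) f i h) =
             (f a + (fun h => \sum_(i <- r) f i h))); last first.
  by apply/funext => h; rewrite big_cons.
exact: is_cvgD.
Qed.

Lemma contra_cvg (eps : R) (u1 v1 u2 v2 : R -> R) : 0 < eps ->
  cvg (u1 h / h @[h --> 0^'+]) -> cvg (v1 h / h @[h --> 0^'+]) ->
  cvg (u2 h / h @[h --> 0^'+]) -> cvg (v2 h / h @[h --> 0^'+]) ->
  (forall h, 0 < h <= eps -> u1 h * u2 h - v1 h * v2 h = h) -> False.
Proof.
move=> He C1 C2 C3 C4 H.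
set q := fun h => (u1 h / h) * (u2 h / h) - (v1 h / h) * (v2 h / h).
have Cq : cvg (q h @[h --> 0^'+]).
  apply: is_cvgB; exact: is_cvgM.
have L0 : (fun h => h * q h) @ (0:R)^'+ --> 0 * lim (q h @[h --> 0^'+]).
  apply: cvgM => //; exact: cvg_at_right_filter cvg_id.
have L1 : (fun h => h * q h) @ (0:R)^'+ --> (1:R).
  apply: cvg_trans (near_eq_cvg _) (cvg_cst (1:R)).
  near=> h.
  have hpos : 0 < h by near: h; exact: nbhs_right_gt.
  have hle : h <= eps by near: h; exact: nbhs_right_ltW.
  have E := H h; rewrite hpos hle in E.
  rewrite /q (_ : h * _ = (u1 h * u2 h - v1 h * v2 h) / h); last first.
    by field; rewrite gt_eqF.
  by rewrite E // divff // gt_eqF.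
have E : (0 * lim (q h @[h --> 0^'+]) : R) = 1.
  exact: (cvg_unique _ L0 L1).
by move/eqP: E; rewrite mul0r eq_sym oner_eq0.
Unshelve. all: by end_near.
Qed.

Local Open Scope complex_scope.
Lemma ReD (x y : R[i]) : complex.Re (x + y) = complex.Re x + complex.Re y. Proof. by case: x; case: y. Qed.
Lemma ImD (x y : R[i]) : complex.Im (x + y) = complex.Im x + complex.Im y. Proof. by case: x; case: y. Qed.
Lemma ReB (x y : R[i]) : complex.Re (x - y) = complex.Re x - complex.Re y. Proof. by case: x; case: y. Qed.
Lemma ImB (x y : R[i]) : complex.Im (x - y) = complex.Im x - complex.Im y. Proof. by case: x; case: y. Qed.
Lemma ReM (x y : R[i]) : complex.Re (x * y) = complex.Re x * complex.Re y - complex.Im x * complex.Im y.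
Proof. by case: x; case: y. Qed.
Lemma ImM (x y : R[i]) : complex.Im (x * y) = complex.Re x * complex.Im y + complex.Im x * complex.Re y.
Proof. by case: x; case: y. Qed.
Lemma Re0 : complex.Re (0 : R[i]) = 0. Proof. by []. Qed.
Lemma Im0 : complex.Im (0 : R[i]) = 0. Proof. by []. Qed.

Lemma tr_cvg m (A : 'M[R[i]]_m) (P : R -> 'M[R[i]]_m) :
  mx_right_differentiable_at0 P -> \tr (A *m P 0) = 0 ->
  cvg (complex.Re (\tr (A *m P h)) / h @[h --> 0^'+]) /\
  cvg (complex.Im (\tr (A *m P h)) / h @[h --> 0^'+]).
Proof.
move=> HP H0.
have E h : \tr (A *m P h) = \sum_i \sum_j A i j * (P h j i - P 0 j i).
  have -> : \tr (A *m P h) = \tr (A *m P h) - \tr (A *m P 0) by rewrite H0 subr0.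
  rewrite /mxtrace -sumrB; apply: eq_bigr => i _.
  rewrite !mxE -sumrB; apply: eq_bigr => j _; by rewrite mulrBr.
split.
  rewrite (_ : (fun h => complex.Re (\tr (A *m P h)) / h) = fun h => \sum_i \sum_j
     (complex.Re (A i j) * ((complex.Re (P h j i) - complex.Re (P 0 j i)) / h)
      - complex.Im (A i j) * ((complex.Im (P h j i) - complex.Im (P 0 j i)) / h))).
    apply: is_cvg_sumR => i; apply: is_cvg_sumR => j.
    by apply: is_cvgB; apply: is_cvgM; [exact: is_cvg_cst| exact: (HP j i).1 | exact: is_cvg_cst | exact: (HP j i).2].
  apply/funext => h; rewrite E (big_morph _ ReD Re0) mulr_suml; apply: eq_bigr => i _.
  rewrite (big_morph _ ReD Re0) mulr_suml; apply: eq_bigr => j _.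
  by rewrite ReM ReB ImB; ring.
rewrite (_ : (fun h => complex.Im (\tr (A *m P h)) / h) = fun h => \sum_i \sum_j
   (complex.Re (A i j) * ((complex.Im (P h j i) - complex.Im (P 0 j i)) / h)
    + complex.Im (A i j) * ((complex.Re (P h j i) - complex.Re (P 0 j i)) / h))).
  apply: is_cvg_sumR => i; apply: is_cvg_sumR => j.
  by apply: is_cvgD; apply: is_cvgM; [exact: is_cvg_cst| exact: (HP j i).2 | exact: is_cvg_cst | exact: (HP j i).1].
apply/funext => h; rewrite E (big_morph _ ImD Im0) mulr_suml; apply: eq_bigr => i _.
rewrite (big_morph _ ImD Im0) mulr_suml; apply: eq_bigr => j _.
by rewrite ImM ReB ImB; ring.
Qed.

End An.

Theorem proposition4 (R : realType) (d : nat) (eps : R)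
    (x y : R -> 'cV[R[i]]_d) :
  (2 <= d)%N -> 0 < eps ->
  (forall t, 0 <= t <= eps -> unit_vec (x t) /\ unit_vec (y t)) ->
  vec_continuous_on eps x -> vec_continuous_on eps y ->
  (forall t, 0 <= t <= eps ->
     twirl (ketbra (x t)) (ketbra (y t)) =
       (t / d%:R)%:C *: Uswap R d + ((1 - t) / (d%:R ^+ 2))%:C *: 1%:M) ->
  x 0 = ket0 R d -> y 0 = Fmx R d *m ket0 R d ->
  ~ (mx_right_differentiable_at0 (fun t => ketbra (x t)) /\
     mx_right_differentiable_at0 (fun t => ketbra (y t))).
Proof.
case: d x y => [|[|n]] x y hd //.
move=> he _ _ _ Htw Hx0 Hy0 [Dx Dy].
set B0 := Smx R n.+2 *m Cmx R n.+2.
set f1 := fun t => \tr (adj B0 *m ketbra (x t)).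
set f2 := fun t => \tr (B0 *m ketbra (y t)).
have Hf t : 0 <= t <= eps -> f1 t * f2 t =
    (t / n.+2%:R)%:C * n.+2%:R + ((1 - t) / (n.+2%:R ^+ 2))%:C * (\tr (adj B0) * \tr B0).
  move=> Ht; rewrite /f1 /f2 -twirl_tr Htw // mulmxDr -!scalemxAr mxtraceD !mxtraceZ.
  by rewrite swap_tr trAB mulmx1 trace_tens.
have natC k : (k%:R : R[i]) = (k%:R : R)%:C by rewrite rmorph_nat.
have DR : (n.+2%:R : R) != 0 by rewrite pnatr_eq0.
have Hk : \tr (adj B0) * \tr B0 = 0.
  have := Hf 0; rewrite lexx ltW // => /(_ isT).
  rewrite /f1 /f2 Hx0 Hy0 f1_0 f2_0 mul0r mul0r (_ : (0 : R)%:C = 0) // mul0r add0r.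
  move/esym/eqP; rewrite mulf_eq0 => /orP [|/eqP //].
  by rewrite subr0 mul1r eq_complex /= eqxx andbT invr_eq0 expf_eq0 (negbTE DR) andbF.
have Hg t : 0 < t <= eps -> f1 t * f2 t = t%:C.
  case/andP => t0 te; rewrite Hf ?te ?ltW // Hk mulr0 addr0 natC -rmorphM.
  by rewrite mulfVK.
have [C1 C2] := @tr_cvg R _ (adj B0) _ Dx (etrans (congr1 _ (congr1 _ (congr1 _ Hx0))) (f1_0 R n)).
have [C3 C4] := @tr_cvg R _ B0 _ Dy (etrans (congr1 _ (congr1 _ (congr1 _ Hy0))) (f2_0 R n)).
apply: (@contra_cvg R eps (fun h => complex.Re (f1 h)) (fun h => complex.Im (f1 h))
   (fun h => complex.Re (f2 h)) (fun h => complex.Im (f2 h)) he C1 C2 C3 C4) => h Hh.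
by rewrite -ReM Hg.
Qed.
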